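(* Let $r\in\{0,\ldots,N\}$ and suppose $\xi_r(\varpi^N)<1/2$. Then for all $A,A'\in\mathbb{R}^{n\times s}$, $$\|\phi(A')-\phi(A)\|_1\le \frac{1}{1-2\xi_r(\varpi^N)}\Big(\mathcal{J}(A')-\mathcal{J}(A)+2\delta_r(A)\Big).$$
   Context: Data: integers $n,s,N\ge1$ and a dataset $\varpi^N=((x_1,y_1),\ldots,(x_N,y_N))$ with $x_t\in\mathbb{R}^n$, $y_t\in\mathbb{R}$. Let $\mathbb{T}=\{1,\ldots,N\}$, $\mathbb{S}=\{1,\ldots,s\}$. For $A=[a_1\ \cdots\ a_s]\in\mathbb{R}^{n\times s}$, $\sigma_A:\mathbb{T}\to\mathbb{S}$ is a switching signal satisfying $\sigma_A(t)\in\arg\min_{i\in\mathbb{S}}|y_t-x_t^\top a_i|$ for all $t$, selected uniquely by a fixed rule depending only on $A$ and the data (among all admissible choices, one maximizing $\min_{i}|I_i(A)|$, ties then broken by assigning the smallest admissible index). $I_i(A)=\{t\in\mathbb{T}:\sigma_A(t)=i\}$. Define $\phi(A)=\big(y_1-x_1^\top a_{\sigma_A(1)},\ldots,y_N-x_N^\top a_{\sigma_A(N)}\big)^\top\in\mathbb{R}^N$ and $\mathcal{J}(A)=\|\phi(A)\|_1=\sum_{t=1}^N\min_{i\in\mathbb{S}}|y_t-a_i^\top x_t|$. For $\mathcal{T}\subset\mathbb{T}$, $\phi_{\mathcal{T}}(A)$ is the subvector of $\phi(A)$ indexed by $\mathcal{T}$. $\mathcal{S}_r=\{w\in\mathbb{R}^N:\|w\|_0\le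 r\}$ ($\|w\|_0$ = number of nonzero entries), and $\delta_r(A)=\inf_{w\in\mathcal{S}_r}\|\phi(A)-w\|_1$, i.e. the sum of the $N-r$ smallest absolute values of entries of $\phi(A)$. The $r$-th concentration ratio is $$\xi_r(\varpi^N)=\sup\Big\{\frac{\|\phi_{\mathcal{T}}(A)-\phi_{\mathcal{T}}(A')\|_1}{\|\phi(A)-\phi(A')\|_1}: A,A'\in\mathbb{R}^{n\times s},\ \mathcal{T}\subset\mathbb{T},\ \phi(A)\ne\phi(A'),\ |\mathcal{T}|\le r\Big\}.$$ *)

(* Defs.v *)
From HB Require Import structures.
From mathcomp Require Import all_boot all_order all_algebra.
From mathcomp Require Import boolp classical_sets reals.
Set Implicit Arguments. Unset Strict Implicit. Unset Printing Implicit Defensive.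
Import Order.TTheory GRing.Theory Num.Theory.
Local Open Scope ring_scope.
Local Open Scope classical_set_scope.

Section Defs.
Variables (R : realType) (n s N : nat).
(* dataset: x t is the regressor x_t in R^n (column vector), y t in R *)
Variables (x : 'I_N -> 'cV[R]_n) (y : 'I_N -> R).

(* residual y_t - x_t^T a_i, where a_i is the i-th column of A *)
Definition resid (A : 'M[R]_(n, s)) (t : 'I_N) (i : 'I_s) : R :=
  y t - \sum_(k < n) x t k 0 * A k i.

Definition admissible (A : 'M[R]_(n, s)) (sg : {ffun 'I_N -> 'I_s}) : bool :=
  [forall t, forall i, `|resid A t (sg t)| <= `|resid A t i|].

Definition min_mode_size (sg : {ffun 'I_N -> 'I_s}) : nat :=
  \big[minn/N]_(i < s) #|[set t | sg t == i]|.

(* lexicographic rank of (sg(1),...,sg(N)) : base-s number with sg(1) most significant *)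
Definition lexrank (sg : {ffun 'I_N -> 'I_s}) : nat :=
  (\sum_(t < N) (sg t : nat) * s ^ (N - 1 - t))%N.

Definition selected (A : 'M[R]_(n, s)) (sg : {ffun 'I_N -> 'I_s}) : bool :=
  [&& admissible A sg,
      [forall tau, admissible A tau ==> (min_mode_size tau <= min_mode_size sg)%N] &
      [forall tau, (admissible A tau && (min_mode_size tau == min_mode_size sg))
                     ==> (lexrank sg <= lexrank tau)%N]].

Definition sigmaA (A : 'M[R]_(n, s)) : option {ffun 'I_N -> 'I_s} :=
  [pick sg | selected A sg].

Definition phi (A : 'M[R]_(n, s)) (t : 'I_N) : R :=
  match sigmaA A with Some sg => resid A t (sg t) | None => 0 end.

Definition norm1 (w : 'I_N -> R) : R := \sum_(t < N) `|w t|.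

Definition norm0 (w : 'I_N -> R) : nat := #|[set t | w t != 0]|.

Definition JA (A : 'M[R]_(n, s)) : R := norm1 (phi A).

Definition delta (r : nat) (A : 'M[R]_(n, s)) : R :=
  inf [set norm1 (fun t => phi A t - w t) | w in [set w : 'I_N -> R | (norm0 w <= r)%N]].

Definition xi (r : nat) : R :=
  sup [set v : R | exists (A A' : 'M[R]_(n, s)) (T : {set 'I_N}),
         phi A <> phi A' /\ (#|T| <= r)%N /\
         v = (\sum_(t in T) `|phi A t - phi A' t|) / norm1 (fun t => phi A t - phi A' t)].
End Defs.

(* Main.v *)
Require Import Defs.
From HB Require Import structures.
From mathcomp Require Import all_boot all_order all_algebra.
From mathcomp Require Import boolp classical_sets reals.
From mathcomp Require Import ring lra.
Import Order.TTheory GRing.Theory Num.Theory.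
Local Open Scope ring_scope.

Theorem lemma2 (R : realType) (n s N : nat) (x : 'I_N -> 'cV[R]_n) (y : 'I_N -> R)
  (hn : (0 < n)%N) (hs : (0 < s)%N) (hN : (0 < N)%N)
  (r : nat) (hr : (r <= N)%N)
  (hxi : xi s x y r < 1 / 2) :
  forall A A' : 'M[R]_(n, s),
    norm1 (fun t => phi x y A' t - phi x y A t)
    <= (1 - 2 * xi s x y r)^-1 * (JA x y A' - JA x y A + 2 * delta x y r A).
Proof.
move=> A A'.
set a := phi x y A; set b := phi x y A'; set X := xi s x y r.
set d := fun t => b t - a t.
have hpos : 0 < 1 - 2 * X.
  move: hxi; rewrite ltr_pdivlMr // /X => hx2; lra.
have key : forall w : 'I_N -> R, (norm0 w <= r)%N ->
   (1 - 2 * X) * norm1 d - (JA x y A' - JA x y A) <= 2 * norm1 (fun t => a t - w t).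
  move=> w hw.
  set T := [set t | w t != 0].
  have hT : \sum_(t in T) `|d t| <= X * norm1 d.
    have [d0|dn0] := eqVneq (norm1 d) 0.
      have : \sum_(t in T) `|d t| <= norm1 d.
        rewrite /norm1 [X in _ <= X](bigID (mem T)) /= lerDl.
        by apply: sumr_ge0 => i _.
      by rewrite d0 mulr0.
    have dpos : 0 < norm1 d by rewrite lt_def dn0 /norm1 sumr_ge0.
    rewrite -ler_pdivrMr //.
    apply: ub_le_sup.
      exists 1 => v [B [B' [T' [hne [hT' ->]]]]].
      have hp : 0 <= norm1 (fun t => phi x y B t - phi x y B' t) by rewrite /norm1 sumr_ge0.
      have [z0|zn0] := eqVneq (norm1 (fun t => phi x y B t - phi x y B' t)) 0.
        by rewrite z0 invr0 mulr0.
      rewrite ler_pdivrMr ?lt_def ?zn0 // mul1r /norm1 [X in _ <= X](bigID (mem T')) /= lerDl.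
      by apply: sumr_ge0.
    exists A', A, T; split.
      move=> e; move: dn0; rewrite /norm1 /d /b /a e.
      by under eq_bigr do rewrite subrr normr0; rewrite big1 ?eqxx.
    split. suff -> : #|T| = norm0 w by []. apply: eq_card => t. rewrite inE. by apply/idP/idP => h; [apply: mem_set | move/set_mem: h].
    done.
  have pt : forall t, `|a t| + `|d t| - 2 * `|a t - w t| - 2 * (if t \in T then `|d t| else 0)
              <= `|b t|.
    move=> t; have -> : b t = a t + d t by rewrite /d addrC subrK.
    have h1 : `|a t| <= `|a t + d t| + `|d t|.
      by have := ler_normD (a t + d t) (- d t); rewrite addrK normrN.
    have h2 : `|d t| <= `|a t + d t| + `|a t|.
      by have := ler_normD (d t + a t) (- a t); rewrite addrK normrN [d t + a t]addrC.
    have h3 : 0 <= `|a t - w t| by [].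
    have h4 : 0 <= `|d t| by [].
    rewrite inE; case: eqP => [w0|wn0] /=.
      rewrite w0 subr0; lra.
    lra.
  have S : \sum_(t < N) (`|a t| + `|d t| - 2 * `|a t - w t| - 2 * (if t \in T then `|d t| else 0))
      <= \sum_(t < N) `|b t| by apply: ler_sum => t _; apply: pt.
  have E : \sum_(t < N) (`|a t| + `|d t| - 2 * `|a t - w t| - 2 * (if t \in T then `|d t| else 0))
     = \sum_(t < N) `|a t| + \sum_(t < N) `|d t| - 2 * \sum_(t < N) `|a t - w t|
       - 2 * \sum_(t in T) `|d t|.
    by rewrite !big_split /= !sumrN -!mulr_sumr -big_mkcond.
  rewrite E in S.
  rewrite /JA -/a -/b /norm1.
  move: hT; rewrite /norm1 => hT.
  have h2 : 2 * \sum_(t in T) `|d t| <= 2 * (X * \sum_(t < N) `|d t|) by rewrite ler_pM2l.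
  rewrite mulrBl mul1r; move: S h2; lra.
rewrite ler_pdivlMl // mulrC.
have hne : ([set norm1 (fun t => a t - w t) | w in [set w : 'I_N -> R | (norm0 w <= r)%N]] !=set0)%classic.
  exists (norm1 (fun t => a t - 0)), (fun _ => 0) => //=.
  rewrite /norm0 eq_card0 // => t.
  by apply/negP => /set_mem; rewrite /= eqxx.
have := lb_le_inf hne (x := ((1 - 2 * X) * norm1 d - (JA x y A' - JA x y A)) / 2).
rewrite /delta -/a.
set I := inf _ => H.
have : ((1 - 2 * X) * norm1 d - (JA x y A' - JA x y A)) / 2 <= I.
  apply: H => v [w hw <-].
  by rewrite ler_pdivrMr // [X in _ <= X]mulrC; apply: key.
move=> h; rewrite mulrC.
move: h; rewrite ler_pdivrMr // => h.
move: h; lra.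
Qed.
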